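(* Let $\Gamma=(V,m,\tau)$ be a weak $W$-graph and let $A\subseteq\Delta$. Then the representation $\mathbb{C}V$, restricted to $W(A)$, contains a copy of the trivial representation of $W(A)$ if and only if $A\cap\tau(v)=\emptyset$ for some $v\in V$.
   Context: $W$ is a Weyl group with a fixed set $\Delta$ of simple roots; for a root $\alpha$, $s_\alpha$ is the reflection in the hyperplane orthogonal to $\alpha$. A weak $W$-graph is a triple $\Gamma=(V,m,\tau)$ where $V$ is a finite set, $m:V\times V\to\mathbb{C}$ is a map, and $\tau$ is a map from $V$ to the power set of $\Delta$, such that the linear maps $s_\alpha:\mathbb{C}V\to\mathbb{C}V$ ($\alpha\in\Delta$) given on basis vectors by $s_\alpha(v)=-v$ if $\alpha\in\tau(v)$ and $s_\alpha(v)=v-\sum_{u\in V,\ \alpha\in\tau(u)} m(u,v)u$ if $\alpha\notin\tau(v)$ define a representation of $W$ on $\mathbb{C}V$. For $A\subseteq\Delta$, $W(A)$ is the subgroup of $W$ generated by $\{s_\alpha:\alpha\in A\}$. *)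

(* Defs.v *)
From HB Require Import structures.
From mathcomp Require Import all_boot all_order all_algebra.
From mathcomp Require Import reals complex.
Set Implicit Arguments. Unset Strict Implicit. Unset Printing Implicit Defensive.
Import Order.TTheory GRing.Theory Num.Theory.
Local Open Scope ring_scope.

Section RootSystems.
Variables (R : realType) (n : nat).

Definition dot (u v : 'rV[R]_n) : R := (u *m v^T) ord0 ord0.

(* reflection in the hyperplane orthogonal to a, acting on row vectors by
   right multiplication: x *m refl a = x - (2 (x,a)/(a,a)) a *)
Definition refl (a : 'rV[R]_n) : 'M[R]_n :=
  1%:M - (2 / dot a a) *: (a^T *m a).

Definition rows_of (s : seq 'rV[R]_n) : 'M[R]_(size s, n) :=
  \matrix_(i < size s) nth 0 s i.

Definition is_root_system (Phi : seq 'rV[R]_n) : Prop :=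
  [/\ (0 : 'rV[R]_n) \notin Phi,
      row_full (rows_of Phi),
      (forall a (c : R), a \in Phi -> c *: a \in Phi -> c = 1 \/ c = -1),
      (forall a b, a \in Phi -> b \in Phi -> b *m refl a \in Phi) &
      (forall a b, a \in Phi -> b \in Phi ->
         exists z : int, 2 * dot b a / dot a a = z%:~R)].

Definition is_base (Phi : seq 'rV[R]_n) (I : finType) (delta : I -> 'rV[R]_n)
  : Prop :=
  [/\ (forall i, delta i \in Phi),
      (forall c : I -> R, \sum_i c i *: delta i = 0 -> forall i, c i = 0) &
      (forall b, b \in Phi -> exists c : I -> nat,
          b = \sum_i (c i)%:R *: delta i \/ b = - \sum_i (c i)%:R *: delta i)].

Definition refl_word (l : seq 'rV[R]_n) : 'M[R]_n :=
  foldr (fun a g => refl a *m g) 1%:M l.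

(* the Weyl group W: the group generated by the reflections s_a, a in Phi
   (finite products suffice since reflections are involutions) *)
Definition in_Weyl (Phi : seq 'rV[R]_n) (g : 'M[R]_n) : Prop :=
  exists l : seq 'rV[R]_n, all (mem Phi) l /\ g = refl_word l.

Definition in_parabolic (I : finType) (delta : I -> 'rV[R]_n) (A : {set I})
  (g : 'M[R]_n) : Prop :=
  exists l : seq I, all (mem A) l /\ g = refl_word (map delta l).

End RootSystems.

Section WGraphs.
Variables (R : realType) (V I : finType).
Local Notation C := (complex R).

(* The linear map s_i on CV (basis V, column vectors, indices via enum_val):
   s_i(v) = -v if i in tau v, else v - sum_{u : i in tau u} m(u,v) u. *)
Definition wg_mat (m : V -> V -> C) (tau : V -> {set I}) (i : I)
  : 'M[C]_#|V| :=
  \matrix_(p, q)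
    (let u := enum_val p in let v := enum_val q in
     if i \in tau v then - (u == v)%:R
     else (u == v)%:R - (if i \in tau u then m u v else 0)).

Definition is_wg_rep (n : nat) (Phi : seq 'rV[R]_n) (delta : I -> 'rV[R]_n)
  (m : V -> V -> C) (tau : V -> {set I}) (rho : 'M[R]_n -> 'M[C]_#|V|) : Prop :=
  [/\ rho 1%:M = 1%:M,
      (forall g h, in_Weyl Phi g -> in_Weyl Phi h -> rho (g *m h) = rho g *m rho h) &
      (forall i, rho (refl (delta i)) = wg_mat m tau i)].

Definition weak_W_graph (n : nat) (Phi : seq 'rV[R]_n) (delta : I -> 'rV[R]_n)
  (m : V -> V -> C) (tau : V -> {set I}) : Prop :=
  exists rho, is_wg_rep Phi delta m tau rho.

End WGraphs.

(* Main.v *)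
Require Import Defs.
From HB Require Import structures.
From mathcomp Require Import all_boot all_order all_algebra.
From mathcomp Require Import reals complex.
From Stdlib Require Import Classical.
Import Order.TTheory GRing.Theory Num.Theory.
Local Open Scope ring_scope.
Set Implicit Arguments. Unset Strict Implicit.

Lemma rw_cat (R : realType) n (l1 l2 : seq 'rV[R]_n) :
  refl_word (l1 ++ l2) = refl_word l1 *m refl_word l2.
Proof. by elim: l1 => [|a l IH] /=; [rewrite mul1mx | rewrite IH mulmxA]. Qed.

Lemma dot_neq0 (R : realType) n (a : 'rV[R]_n) : a != 0 -> dot a a != 0.
Proof.
move=> Ha; apply/negP => /eqP H; apply: (negP Ha); apply/eqP/rowP => j.
move: H; rewrite /dot mxE.
under eq_bigr do rewrite mxE.
move=> H.
have nn : forall i : 'I_n, predT i -> 0 <= a 0 i * a 0 i.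
  by move=> i _; rewrite -expr2 sqr_ge0.
have := @psumr_eq0P _ _ predT (fun j => a 0 j * a 0 j) nn H j isT.
by rewrite !mxE => /eqP; rewrite mulf_eq0 orbb => /eqP.
Qed.

Lemma refl_invol (R : realType) n (a : 'rV[R]_n) : a != 0 -> refl a *m refl a = 1%:M.
Proof.
move=> /dot_neq0 Hd.
have MM : (a^T *m a) *m (a^T *m a) = dot a a *: (a^T *m a).
  by rewrite mulmxA -(mulmxA a^T) (mx11_scalar (a *m a^T)) mul_mx_scalar -scalemxAl.
rewrite /refl mulmxBl !mulmxBr !mul1mx mulmx1 -!scalemxAl -!scalemxAr MM !scalerA.
have -> : 2 / dot a a * (2 / dot a a) * dot a a = 2 / dot a a + 2 / dot a a.
  by rewrite -mulrA divfK // mulr_natr mulr2n.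
rewrite scalerDl.
by rewrite opprB addrK subrK.
Qed.

Lemma finite_inj (T : eqType) (F : finType) (S : T -> Prop) (code : T -> F) :
  (forall x y, S x -> S y -> code x = code y -> x = y) ->
  exists s : seq T, uniq s /\ forall x, S x <-> x \in s.
Proof.
move=> Hinj.
suff [s [H1 H2]] : exists s : seq T, (forall x, x \in s -> S x) /\
   (forall x, S x -> code x \in enum F -> x \in s).
  exists (undup s); split; first exact: undup_uniq.
  move=> x; rewrite mem_undup; split; last exact: H1.
  by move=> Sx; apply: H2 => //; rewrite mem_enum.
elim: (enum F) => [|f L [s [H1 H2]]].
  by exists [::]; split.
case: (classic (exists x, S x /\ code x = f)) => [[x [Sx cx]]|N].
  exists (x :: s); split.
    by move=> y; rewrite in_cons => /orP [/eqP -> //|]; apply: H1.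
  move=> y Sy; rewrite !in_cons => /orP [/eqP cy|cy].
    by rewrite (Hinj y x) // ?eqxx // cy cx.
  by rewrite H2 ?orbT.
exists s; split => // y Sy; rewrite in_cons => /orP [/eqP cy|]; last exact: H2.
by case: N; exists y.
Qed.

Lemma stable_inj (R : realType) n (Phi : seq 'rV[R]_n) (g h : 'M[R]_n) :
  row_full (rows_of Phi) ->
  (forall i : 'I_(size Phi), nth 0 Phi i *m g = nth 0 Phi i *m h) -> g = h.
Proof.
case/row_fullP => B HB E.
have E2 : rows_of Phi *m g = rows_of Phi *m h.
  by apply/row_matrixP => i; rewrite !row_mul rowK E.
by rewrite -(mul1mx g) -HB -mulmxA E2 mulmxA HB mul1mx.
Qed.

Lemma par_stable (R : realType) n (Phi : seq 'rV[R]_n) (I : finType)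
  (delta : I -> 'rV[R]_n) (A : {set I}) g :
  is_root_system Phi -> is_base Phi delta -> in_parabolic delta A g ->
  forall b, b \in Phi -> b *m g \in Phi.
Proof.
case=> _ _ _ H4 _ [Hd _ _] [l [_ ->]].
elim: l => [|i l IH] b Hb /=; first by rewrite mulmx1.
by rewrite mulmxA; apply: IH; apply: H4.
Qed.

Lemma par_finite (R : realType) n (Phi : seq 'rV[R]_n) (I : finType)
  (delta : I -> 'rV[R]_n) (A : {set I}) :
  is_root_system Phi -> is_base Phi delta ->
  exists gs : seq 'M[R]_n, uniq gs /\ forall g, in_parabolic delta A g <-> g \in gs.
Proof.
move=> Hr Hb.
pose code (g : 'M[R]_n) : {ffun 'I_(size Phi) -> 'I_(size Phi).+1} :=
  [ffun i : 'I_(size Phi) => (inord (index (nth 0 Phi i *m g) Phi) : 'I_(size Phi).+1)].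
apply: (@finite_inj _ _ _ code) => g h Pg Ph /ffunP E.
have [_ Hfull _ _ _] := Hr.
apply: (@stable_inj R n Phi g h Hfull) => i.
have Hg := par_stable Hr Hb Pg (mem_nth 0 (ltn_ord i)).
have Hh := par_stable Hr Hb Ph (mem_nth 0 (ltn_ord i)).
have := congr1 val (E i); rewrite !ffunE /= !inordK ?ltnS ?index_size // => Ei.
by rewrite -(nth_index 0 Hg) Ei nth_index.
Qed.

Lemma weyl_rw (R : realType) n (Phi : seq 'rV[R]_n) (I : finType)
  (delta : I -> 'rV[R]_n) l :
  is_base Phi delta -> in_Weyl Phi (refl_word (map delta l)).
Proof.
case=> Hd _ _; exists (map delta l); split => //.
by apply/allP => b /mapP [i _ ->]; apply: Hd.
Qed.

Lemma weyl_refl (R : realType) n (Phi : seq 'rV[R]_n) (I : finType)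
  (delta : I -> 'rV[R]_n) i :
  is_base Phi delta -> in_Weyl Phi (refl (delta i)).
Proof. by move=> Hb; have := weyl_rw [:: i] Hb; rewrite /= mulmx1. Qed.

Lemma par_weyl (R : realType) n (Phi : seq 'rV[R]_n) (I : finType)
  (delta : I -> 'rV[R]_n) (A : {set I}) g :
  is_base Phi delta -> in_parabolic delta A g -> in_Weyl Phi g.
Proof. by move=> Hb [l [_ ->]]; apply: weyl_rw. Qed.

Section Rep.
Variables (R : realType) (n : nat) (Phi : seq 'rV[R]_n)
  (I : finType) (delta : I -> 'rV[R]_n) (V : finType)
  (m : V -> V -> complex R) (tau : V -> {set I})
  (rho : 'M[R]_n -> 'M[complex R]_#|V|) (A : {set I}).
Hypothesis Hb : is_base Phi delta.
Hypothesis Hrep : is_wg_rep Phi delta m tau rho.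

Lemma row_fix (f : 'rV[complex R]_#|V|) g :
  (forall i, i \in A -> f *m wg_mat m tau i = f) ->
  in_parabolic delta A g -> f *m rho g = f.
Proof.
case: Hrep => H1 H2 H3 Hf [l [Hl ->]].
elim: l Hl => [|i l IH] /=; first by rewrite H1 mulmx1.
case/andP => Hi Hl.
rewrite H2; [|exact: weyl_refl|exact: weyl_rw].
by rewrite H3 mulmxA Hf // IH.
Qed.

Lemma col_fix (x : 'cV[complex R]_#|V|) g :
  (forall i, i \in A -> wg_mat m tau i *m x = x) ->
  in_parabolic delta A g -> rho g *m x = x.
Proof.
case: Hrep => H1 H2 H3 Hf [l [Hl ->]].
elim: l Hl => [|i l IH] /=; first by rewrite H1 mul1mx.
case/andP => Hi Hl.
rewrite H2; [|exact: weyl_refl|exact: weyl_rw].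
by rewrite H3 -mulmxA IH // Hf.
Qed.

End Rep.

Lemma delta_sum (K : pzRingType) (V : finType) (g : 'I_#|V| -> K) q :
  \sum_p g p * ((enum_val p == enum_val q)%:R) = g q.
Proof.
rewrite (bigD1 q) //= eqxx mulr1 big1 ?addr0 // => p Hp.
by rewrite (inj_eq enum_val_inj) (negbTE Hp) mulr0.
Qed.

Lemma fix_zero (R : realType) (V I : finType) (m : V -> V -> complex R)
  (tau : V -> {set I}) (f : 'rV[complex R]_#|V|) i q :
  i \in tau (enum_val q) -> f *m wg_mat m tau i = f -> f 0 q = 0.
Proof.
move=> Hi /rowP/(_ q); rewrite !mxE.
under eq_bigr => p _ do rewrite mxE /= Hi mulrN.
rewrite sumrN delta_sum => H.
have /eqP : f 0 q *+ 2 = 0 by rewrite mulr2n -{1}H addNr.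
by rewrite mulrn_eq0 /= => /eqP.
Qed.

Lemma ind_fix (R : realType) (V I : finType) (m : V -> V -> complex R)
  (tau : V -> {set I}) (A : {set I}) i :
  i \in A ->
  let f := \row_q ((A :&: tau (enum_val q) == set0)%:R : complex R) in
  f *m wg_mat m tau i = f.
Proof.
move=> HiA f; apply/rowP => q; rewrite mxE.
have f0 : forall p, i \in tau (enum_val p) -> f 0 p = 0.
  move=> p Hp; rewrite /f mxE; case: eqP => // /setP /(_ i).
  by rewrite !inE HiA Hp.
case Hq: (i \in tau (enum_val q)).
  under eq_bigr => p _ do rewrite [wg_mat _ _ _ _ _]mxE /= Hq mulrN.
  by rewrite sumrN delta_sum f0 // oppr0.
rewrite -[RHS]/(f 0 q) -(delta_sum (fun p => f 0 p)).
apply: eq_bigr => p _; rewrite [wg_mat _ _ _ _ _]mxE /= Hq.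
case Hp: (i \in tau (enum_val p)); last by rewrite subr0.
by rewrite f0 // !mul0r.
Qed.

Lemma par_mulr (R : realType) n (I : finType) (delta : I -> 'rV[R]_n)
  (A : {set I}) g i :
  i \in A -> in_parabolic delta A g -> in_parabolic delta A (g *m refl (delta i)).
Proof.
move=> Hi [l [Hl ->]]; exists (l ++ [:: i]); split.
  by rewrite all_cat Hl /= Hi.
by rewrite map_cat rw_cat /= mulmx1.
Qed.

Lemma par_mull (R : realType) n (I : finType) (delta : I -> 'rV[R]_n)
  (A : {set I}) g i :
  i \in A -> in_parabolic delta A g -> in_parabolic delta A (refl (delta i) *m g).
Proof.
by move=> Hi [l [Hl ->]]; exists (i :: l); split => //=; rewrite Hi.
Qed.

Unset Implicit Arguments.
Theorem corollary2p7 (R : realType) (n : nat) (Phi : seq 'rV[R]_n)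
  (I : finType) (delta : I -> 'rV[R]_n) (V : finType)
  (m : V -> V -> complex R) (tau : V -> {set I})
  (rho : 'M[R]_n -> 'M[complex R]_#|V|) (A : {set I}) :
  is_root_system Phi -> is_base Phi delta ->
  is_wg_rep Phi delta m tau rho ->
  (exists x : 'cV[complex R]_#|V|,
     x != 0 /\ forall g, in_parabolic delta A g -> rho g *m x = x)
  <-> (exists v : V, A :&: tau v = set0).
Proof.
move=> Hr Hb Hrep.
have dnz : forall i, delta i != 0.
  move=> i; apply/negP => /eqP E; case: Hr => H0 _ _ _ _; case: Hb => Hd _ _.
  by have := Hd i; rewrite E (negbTE H0).
have inv : forall i, refl (delta i) *m refl (delta i) = 1%:M.
  by move=> i; apply: refl_invol.
have [gs [Hu Hgs]] := par_finite A Hr Hb.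
have gs1 : 1%:M \in gs by apply/Hgs; exists [::].
have Hrep' := Hrep.
case: Hrep' => H1 H2 H3.
pose Pm := \sum_(g <- gs) rho g.
have perm_r : forall i, i \in A ->
    perm_eq (map (fun g => g *m refl (delta i)) gs) gs.
  move=> i Hi; have Hu2 : uniq (map (fun g => g *m refl (delta i)) gs).
    rewrite map_inj_uniq // => g h E.
    by rewrite -(mulmx1 g) -(inv i) mulmxA E -mulmxA inv mulmx1.
  apply: uniq_perm => //; apply: (uniq_min_size Hu2 _ _).2.
    by move=> h /mapP [g Hg ->]; apply/Hgs; apply: par_mulr => //; apply/Hgs.
  by rewrite size_map.
have perm_l : forall i, i \in A ->
    perm_eq (map (fun g => refl (delta i) *m g) gs) gs.
  move=> i Hi; have Hu2 : uniq (map (fun g => refl (delta i) *m g) gs).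
    rewrite map_inj_uniq // => g h E.
    by rewrite -(mul1mx g) -(inv i) -mulmxA E mulmxA inv mul1mx.
  apply: uniq_perm => //; apply: (uniq_min_size Hu2 _ _).2.
    by move=> h /mapP [g Hg ->]; apply/Hgs; apply: par_mull => //; apply/Hgs.
  by rewrite size_map.
have PmR : forall i, i \in A -> Pm *m wg_mat m tau i = Pm.
  move=> i Hi; rewrite -H3 /Pm mulmx_suml.
  rewrite (eq_big_seq (fun g => rho (g *m refl (delta i)))); last first.
    move=> g Hg; rewrite H2 //; first exact: (par_weyl Hb ((Hgs g).2 Hg)).
    exact: weyl_refl.
  by rewrite -(big_map (fun g => g *m refl (delta i)) xpredT rho) (perm_big _ (perm_r i Hi)).
have PmL : forall i, i \in A -> wg_mat m tau i *m Pm = Pm.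
  move=> i Hi; rewrite -H3 /Pm mulmx_sumr.
  rewrite (eq_big_seq (fun g => rho (refl (delta i) *m g))); last first.
    move=> g Hg; rewrite H2 //; first exact: weyl_refl.
    exact: (par_weyl Hb ((Hgs g).2 Hg)).
  by rewrite -(big_map (fun g => refl (delta i) *m g) xpredT rho) (perm_big _ (perm_l i Hi)).
have sz : size gs != 0%N by case: (gs) gs1.
split.
  case=> x [xnz Hx].
  case: (boolP [exists v, A :&: tau v == set0]) => [/existsP [v /eqP Hv]|Hn].
    by exists v.
  exfalso.
  have Pm0 : Pm = 0.
    apply/row_matrixP => p; rewrite row0; apply/rowP => q; rewrite [RHS]mxE.
    have fixp : forall i, i \in A -> row p Pm *m wg_mat m tau i = row p Pm.
      by move=> i Hi; rewrite -row_mul PmR.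
    have := (existsPn Hn) (enum_val q).
    case/set0Pn => i; rewrite inE => /andP [HiA Hit].
    by have := fix_zero Hit (fixp i HiA); rewrite mxE.
  have : Pm *m x = x *+ size gs.
    rewrite /Pm mulmx_suml (eq_big_seq (fun _ => x)); last first.
      by move=> g Hg; apply: Hx; apply/Hgs.
    by rewrite big_const_seq count_predT iter_addr_0.
  rewrite Pm0 mul0mx => /eqP; rewrite eq_sym -scaler_nat scalemx_eq0 pnatr_eq0.
  by rewrite (negbTE xnz) (negbTE sz).
case=> v0 Hv0.
pose f : 'rV[complex R]_#|V| := \row_q ((A :&: tau (enum_val q) == set0)%:R : complex R).
have ff : forall i, i \in A -> f *m wg_mat m tau i = f.
  by move=> i Hi; exact: (@ind_fix R V I m tau A i Hi).
have fP : f *m Pm = f *+ size gs.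
  rewrite /Pm mulmx_sumr (eq_big_seq (fun _ => f)); last first.
    by move=> g Hg; apply: (row_fix Hb Hrep ff); apply/Hgs.
  by rewrite big_const_seq count_predT iter_addr_0.
have Pmnz : Pm != 0.
  apply/eqP => P0; move: fP; rewrite P0 mulmx0 => /eqP.
  rewrite eq_sym -scaler_nat scalemx_eq0 pnatr_eq0 (negbTE sz) /= => /eqP E.
  move/rowP: E => /(_ (enum_rank v0)).
  by rewrite !mxE enum_rankK Hv0 eqxx => /eqP; rewrite oner_eq0.
case: (classic (exists q, col q Pm != 0)) => [[q Hq]|N].
  exists (col q Pm); split => // g Hg.
  apply: (col_fix Hb Hrep _ Hg) => i Hi.
  by rewrite !colE mulmxA PmL.
case/negP: Pmnz; apply/eqP/matrixP => p q.
have : col q Pm = 0 by apply/eqP; apply/negPn/negP => H; apply: N; exists q.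
by move/matrixP/(_ p 0); rewrite !mxE.
Qed.
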